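(* For every $k\ge1$ and every $g\in G_k$, we have $g^2\in G_k'$.
   Context: Let $C_2=\{e,\sigma\}$ with $\sigma=(1,2)$. Define $B_1=C_2$ and $B_k=B_{k-1}\wr C_2$ for $k>1$, with elements written as wreath recursions $(g_1,g_2)\pi$, $g_1,g_2\in B_{k-1}$, $\pi\in C_2$, and multiplication $(g_1,g_2)\pi\cdot(h_1,h_2)\rho=(g_1h_{\pi(1)},g_2h_{\pi(2)})\pi\rho$. Define $G_1=\{e\}$ and, for $k>1$, $G_k=\{(g_1,g_2)\pi\in B_k : g_1g_2\in G_{k-1}\}$. *)

(* Defs.v *)
(* B n represents B_{n+1}: B_1 = C_2 (bool, true = sigma = (1 2)),
   B_{k} = B_{k-1} wr C_2, elements ((g1, g2), pi). *)
Fixpoint B (n : nat) : Type :=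
  match n with
  | 0 => bool
  | S m => (B m * B m * bool)%type
  end.

Fixpoint one (n : nat) : B n :=
  match n return B n with
  | 0 => false
  | S m => (one m, one m, false)
  end.

(* (g1,g2)pi * (h1,h2)rho = (g1 h_{pi(1)}, g2 h_{pi(2)}) pi rho *)
Fixpoint mul (n : nat) : B n -> B n -> B n :=
  match n return B n -> B n -> B n with
  | 0 => fun a b => xorb a b
  | S m => fun g h =>
      match g, h with
      | (g1, g2, p), (h1, h2, r) =>
          if p then (mul m g1 h2, mul m g2 h1, xorb p r)
          else (mul m g1 h1, mul m g2 h2, xorb p r)
      end
  end.

Fixpoint inv (n : nat) : B n -> B n :=
  match n return B n -> B n with
  | 0 => fun a => a
  | S m => fun g =>
      match g with
      | (g1, g2, p) =>
          if p then (inv m g2, inv m g1, p) else (inv m g1, inv m g2, p)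
      end
  end.

Definition comm (n : nat) (a b : B n) : B n :=
  mul n (inv n a) (mul n (inv n b) (mul n a b)).

(* inG n g  <->  g belongs to G_{n+1}:  G_1 = {e},
   G_k = {(g1,g2)pi in B_k | g1 g2 in G_{k-1}} *)
Fixpoint inG (n : nat) : B n -> Prop :=
  match n return B n -> Prop with
  | 0 => fun g => g = false
  | S m => fun g => match g with (g1, g2, _) => inG m (mul m g1 g2) end
  end.

(* The subgroup generated by commutators [a,b] with P a, P b:
   all finite products of such commutators and their inverses. *)
Inductive derived (n : nat) (P : B n -> Prop) : B n -> Prop :=
| der_one : derived n P (one n)
| der_comm : forall a b y, P a -> P b -> derived n P y ->
    derived n P (mul n (comm n a b) y)
| der_invcomm : forall a b y, P a -> P b -> derived n P y ->
    derived n P (mul n (inv n (comm n a b)) y).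

(* Main.v *)
Require Import Defs.
From Stdlib Require Import Bool Setoid.

Lemma mul_assoc : forall n (x y z : B n), mul n (mul n x y) z = mul n x (mul n y z).
Proof.
  induction n as [|m IH]; intros x y z.
  - simpl. destruct x, y, z; reflexivity.
  - destruct x as [[x1 x2] p], y as [[y1 y2] q], z as [[z1 z2] r].
    destruct p, q, r; simpl; rewrite ?IH; reflexivity.
Qed.

Lemma mul_1l : forall n (x : B n), mul n (one n) x = x.
Proof.
  induction n as [|m IH]; intros x.
  - reflexivity.
  - destruct x as [[x1 x2] p]; simpl; rewrite !IH; reflexivity.
Qed.

Lemma mul_1r : forall n (x : B n), mul n x (one n) = x.
Proof.
  induction n as [|m IH]; intros x.
  - simpl. destruct x; reflexivity.
  - destruct x as [[x1 x2] p]; destruct p; simpl; rewrite !IH; reflexivity.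
Qed.

Lemma mul_inv_l : forall n (x : B n), mul n (inv n x) x = one n.
Proof.
  induction n as [|m IH]; intros x.
  - simpl. destruct x; reflexivity.
  - destruct x as [[x1 x2] p]; destruct p; simpl; rewrite !IH; reflexivity.
Qed.

Lemma mul_inv_r : forall n (x : B n), mul n x (inv n x) = one n.
Proof.
  induction n as [|m IH]; intros x.
  - simpl. destruct x; reflexivity.
  - destruct x as [[x1 x2] p]; destruct p; simpl; rewrite !IH; reflexivity.
Qed.

Lemma inv_one : forall n, inv n (one n) = one n.
Proof. induction n as [|m IH]; simpl; rewrite ?IH; reflexivity. Qed.

Lemma inv_inv : forall n (x : B n), inv n (inv n x) = x.
Proof.
  induction n as [|m IH]; intros x.
  - reflexivity.
  - destruct x as [[x1 x2] p]; destruct p; simpl; rewrite !IH; reflexivity.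
Qed.

Lemma inv_mul : forall n (x y : B n), inv n (mul n x y) = mul n (inv n y) (inv n x).
Proof.
  induction n as [|m IH]; intros x y.
  - simpl. destruct x, y; reflexivity.
  - destruct x as [[x1 x2] p], y as [[y1 y2] q]; destruct p, q; simpl; rewrite !IH; reflexivity.
Qed.

Lemma mul_cancel_l : forall n (x y : B n), mul n x (mul n (inv n x) y) = y.
Proof. intros. rewrite <- mul_assoc, mul_inv_r, mul_1l. reflexivity. Qed.

Lemma mul_cancel_l2 : forall n (x y : B n), mul n (inv n x) (mul n x y) = y.
Proof. intros. rewrite <- mul_assoc, mul_inv_l, mul_1l. reflexivity. Qed.

Ltac gsimpl := unfold comm; repeat progress (rewrite ?mul_assoc, ?inv_mul, ?inv_inv,
  ?mul_1l, ?mul_1r, ?mul_inv_l, ?mul_inv_r, ?mul_cancel_l, ?mul_cancel_l2, ?inv_one).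

Fixpoint eps (n : nat) : B n -> bool :=
  match n return B n -> bool with
  | 0 => fun b => b
  | S m => fun g => match g with (g1, g2, _) => xorb (eps m g1) (eps m g2) end
  end.

Lemma eps_mul : forall n (x y : B n), eps n (mul n x y) = xorb (eps n x) (eps n y).
Proof.
  induction n as [|m IH]; intros x y.
  - reflexivity.
  - destruct x as [[x1 x2] p], y as [[y1 y2] q]; destruct p; simpl; rewrite !IH;
    destruct (eps m x1), (eps m x2), (eps m y1), (eps m y2); reflexivity.
Qed.

Lemma eps_one : forall n, eps n (one n) = false.
Proof. induction n as [|m IH]; simpl; rewrite ?IH; reflexivity. Qed.

Lemma eps_inv : forall n (x : B n), eps n (inv n x) = eps n x.
Proof.
  induction n as [|m IH]; intros x.
  - reflexivity.
  - destruct x as [[x1 x2] p]; destruct p; simpl; rewrite !IH;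
    destruct (eps m x1), (eps m x2); reflexivity.
Qed.

Lemma inG_eps : forall n (x : B n), inG n x <-> eps n x = false.
Proof.
  induction n as [|m IH]; intros x.
  - simpl. tauto.
  - destruct x as [[x1 x2] p]; simpl. rewrite IH, eps_mul. tauto.
Qed.

Lemma derived_mul : forall n P (x y : B n), derived n P x -> derived n P y ->
  derived n P (mul n x y).
Proof.
  intros n P x y Hx Hy. induction Hx.
  - rewrite mul_1l. exact Hy.
  - rewrite mul_assoc. apply der_comm; assumption.
  - rewrite mul_assoc. apply der_invcomm; assumption.
Qed.

Lemma inG_one_l : forall m (a : B m), inG m a -> inG (S m) (one m, a, false).
Proof. intros m a H. simpl. rewrite mul_1l. exact H. Qed.

Lemma lift : forall m (y : B m), derived m (inG m) y ->
  derived (S m) (inG (S m)) (one m, y, false).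
Proof.
  intros m y H. induction H.
  - exact (der_one (S m) (inG (S m))).
  - replace (one m, mul m (comm m a b) y, false) with
      (mul (S m) (comm (S m) (one m, a, false) (one m, b, false)) (one m, y, false)).
    + apply der_comm; auto using inG_one_l.
    + simpl. gsimpl. reflexivity.
  - replace (one m, mul m (inv m (comm m a b)) y, false) with
      (mul (S m) (inv (S m) (comm (S m) (one m, a, false) (one m, b, false))) (one m, y, false)).
    + apply der_invcomm; auto using inG_one_l.
    + simpl. gsimpl. reflexivity.
Qed.

Lemma lemC : forall m (a b : B m), eps m a = eps m b ->
  derived (S m) (inG (S m)) (mul m (inv m a) b, mul m (inv m b) a, false).
Proof.
  intros m a b E.
  replace (mul m (inv m a) b, mul m (inv m b) a, false) with
    (mul (S m) (comm (S m) (a, b, false) (one m, one m, true)) (one (S m))).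
  - apply der_comm.
    + apply inG_eps. simpl. rewrite E. destruct (eps m b); reflexivity.
    + apply inG_eps. simpl. rewrite eps_one. reflexivity.
    + apply der_one.
  - simpl. gsimpl. reflexivity.
Qed.

Fixpoint w (n : nat) : B n :=
  match n return B n with
  | 0 => true
  | S m => (w m, one m, false)
  end.

Lemma eps_w : forall n, eps n (w n) = true.
Proof. induction n as [|m IH]; simpl; rewrite ?IH, ?eps_one; reflexivity. Qed.

Lemma comm_self : forall n (x : B n), comm n x x = one n.
Proof. intros. gsimpl. reflexivity. Qed.
Lemma comm_1l : forall n (x : B n), comm n (one n) x = one n.
Proof. intros. gsimpl. reflexivity. Qed.
Lemma comm_1r : forall n (x : B n), comm n x (one n) = one n.
Proof. intros. gsimpl. reflexivity. Qed.

Lemma lemE : forall m (u v : B m),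
  derived (S m) (inG (S m)) (one m, comm m u v, false).
Proof.
  intros m u v.
  set (p := if eps m u then w m else one m).
  set (q := if eps m v then w m else one m).
  assert (Hp : eps m p = eps m u) by (unfold p; destruct (eps m u); rewrite ?eps_w, ?eps_one; reflexivity).
  assert (Hq : eps m q = eps m v) by (unfold q; destruct (eps m v); rewrite ?eps_w, ?eps_one; reflexivity).
  assert (Hpq : comm m p q = one m) by
    (unfold p, q; destruct (eps m u), (eps m v); rewrite ?comm_self, ?comm_1l, ?comm_1r; reflexivity).
  replace (one m, comm m u v, false) with
    (mul (S m) (comm (S m) (p, u, false) (q, v, false)) (one (S m))).
  - apply der_comm.
    + apply inG_eps. simpl. rewrite Hp. destruct (eps m u); reflexivity.
    + apply inG_eps. simpl. rewrite Hq. destruct (eps m v); reflexivity.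
    + apply der_one.
  - rewrite mul_1r. unfold comm. simpl. fold (comm m p q). fold (comm m u v).
    rewrite Hpq. reflexivity.
Qed.

Theorem mainTheorem17 : forall (n : nat) (g : B n),
  inG n g -> derived n (inG n) (mul n g g).
Proof.
  induction n as [|m IH]; intros g Hg.
  - simpl in Hg. subst g. simpl. exact (der_one 0 (inG 0)).
  - destruct g as [[g1 g2] p].
    pose proof Hg as Hg'. simpl in Hg'.
    assert (Hh := IH _ Hg').
    apply lift in Hh.
    pose proof Hg' as He. apply inG_eps in He. rewrite eps_mul in He.
    assert (E : eps m g1 = eps m g2) by (destruct (eps m g1), (eps m g2); simpl in He; congruence).
    destruct p.
    + pose proof (lemC m (inv m g1) g2) as X. rewrite eps_inv in X. specialize (X E).
      pose proof (lemE m g2 g1) as Z.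
      pose proof (derived_mul _ _ _ _ X (derived_mul _ _ _ _ Hh Z)) as R.
      replace (mul (S m) (g1, g2, true) (g1, g2, true)) with
        (mul (S m) (mul m (inv m (inv m g1)) g2, mul m (inv m g2) (inv m g1), false)
          (mul (S m) (one m, mul m (mul m g1 g2) (mul m g1 g2), false)
            (one m, comm m g2 g1, false))).
      exact R.
      simpl; f_equal; try f_equal; gsimpl; reflexivity.
    + pose proof (lemC m (inv m g1) g1) as X. rewrite eps_inv in X. specialize (X eq_refl).
      pose proof (lemE m (mul m (inv m g2) (mul m g1 g2)) g2) as Z.
      pose proof (derived_mul _ _ _ _ X (derived_mul _ _ _ _ Hh Z)) as R.
      replace (mul (S m) (g1, g2, false) (g1, g2, false)) with
        (mul (S m) (mul m (inv m (inv m g1)) g1, mul m (inv m g1) (inv m g1), false)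
          (mul (S m) (one m, mul m (mul m g1 g2) (mul m g1 g2), false)
            (one m, comm m (mul m (inv m g2) (mul m g1 g2)) g2, false))).
      exact R.
      simpl; f_equal; try f_equal; gsimpl; reflexivity.
Qed.
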